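(* Let $\mu_1,\mu_2$ form an AT-system on nodes $z_1,\dots,z_N$. Let $(A_{n,1},A_{n,2})$, $1\le n\le N$, be the type I multiple orthogonal polynomials on the step-line, with exact degrees $\deg A_{n,j}=n_j-1$ (where $\vec n=(n_1,n_2)$ is the step-line index of $n$), and suppose they satisfy, for $j=1,2$ and $1\le n\le N-2$, $$xA_{n,j}(x)=A_{n-1,j}(x)+b_{n-1}A_{n,j}(x)+c_nA_{n+1,j}(x)+d_{n+1}A_{n+2,j}(x),$$ with $A_{0,j}\equiv0$, where $b_n,c_n,d_n$ are the coefficients of the step-line recurrence of the monic type II polynomials. Then $d_{n+1}\neq0$ for all $n=1,\dots,N-2$.
   Context: Discrete measures: $\mu_j=\sum_{i=1}^N\alpha_{j,i}\delta_{z_i}$, $j=1,2$, with $\alpha_{j,i}>0$ and distinct real $z_i$; $\Delta\subset\mathbb{R}$ is an interval containing all $z_i$. A system of $n$ linearly independent functions on $\Delta$ is a Chebyshev system if every nontrivial real linear combination has at most $n-1$ zeros in $\Delta$. The measures form an AT-system if there exist continuous functions $\alpha_1,\alpha_2$ on $\Delta$ with $\alpha_j(z_i)=\alpha_{j,i}$ such that for every $(n_1,n_2)$ with $n_1+n_2\le N$ the functions $x^k\alpha_1(x)$ ($0\le k\le n_1-1$), $x^k\alpha_2(x)$ ($0\le k\le n_2-1$) form a Chebyshev system on $\Delta$. Step-line index: $n=2k\mapsto\vec n=(k,k)$, $n=2k+1\mapsto\vec n=(k+1,k)$. Type I MOPs for index $\vec n$: polynomials $A_{\vec n,1},A_{\vec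 n,2}$ with $\deg A_{\vec n,j}\le n_j-1$ such that $\sum_{i=1}^N\big(\alpha_{1,i}A_{\vec n,1}(z_i)+\alpha_{2,i}A_{\vec n,2}(z_i)\big)z_i^k$ equals $0$ for $0\le k\le |\vec n|-2$ and $1$ for $k=|\vec n|-1$; $A_{n,j}:=A_{\vec n,j}$. Monic type II MOP $P_n$: monic of degree $n=|\vec n|$ with $\sum_i\alpha_{j,i}P_n(z_i)z_i^k=0$ for $0\le k\le n_j-1$, $j=1,2$; they satisfy $xP_n=P_{n+1}+b_nP_n+c_nP_{n-1}+d_nP_{n-2}$. *)

(* Defs.v *)
From HB Require Import structures.
From mathcomp Require Import all_boot all_order all_algebra.
From mathcomp Require Import all_classical all_reals topology normedtype.
Import numFieldNormedType.Exports.
Set Implicit Arguments. Unset Strict Implicit. Unset Printing Implicit Defensive.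
Import Order.TTheory GRing.Theory Num.Theory.
Local Open Scope classical_set_scope.
Local Open Scope ring_scope.

(* Step-line multi-index: n = 2k -> (k,k), n = 2k+1 -> (k+1,k). *)
Definition sl1 (n : nat) : nat := uphalf n.
Definition sl2 (n : nat) : nat := n./2.

(* The functions x^k a1(x) (k < n1), x^k a2(x) (k < n2) form a Chebyshev
   system on Delta.  A real linear combination of them is exactly
   p1(x) a1(x) + p2(x) a2(x) with deg p1 <= n1-1, deg p2 <= n2-1. *)
Definition chebyshev_pair {R : realType} (Delta : interval R)
  (a1 a2 : R -> R) (n1 n2 : nat) : Prop :=
  (forall p1 p2 : {poly R}, (size p1 <= n1)%N -> (size p2 <= n2)%N ->
     (forall x, x \in Delta -> p1.[x] * a1 x + p2.[x] * a2 x = 0) ->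
     p1 = 0 /\ p2 = 0) /\
  (forall p1 p2 : {poly R}, (size p1 <= n1)%N -> (size p2 <= n2)%N ->
     (p1 != 0) || (p2 != 0) ->
     forall s : seq R, uniq s -> all (fun x => x \in Delta) s ->
       all (fun x => p1.[x] * a1 x + p2.[x] * a2 x == 0) s ->
       (size s <= (n1 + n2).-1)%N).

(* mu_j = sum_i alpha_j i delta_{z i} form an AT-system on Delta. *)
Definition AT_system {R : realType} (N : nat) (z : 'I_N -> R)
  (alpha1 alpha2 : 'I_N -> R) (Delta : interval R) : Prop :=
  exists a1 a2 : R -> R,
    {within [set` Delta], continuous a1} /\
    {within [set` Delta], continuous a2} /\
    (forall i, a1 (z i) = alpha1 i) /\ (forall i, a2 (z i) = alpha2 i) /\
    (forall n1 n2 : nat, (n1 + n2 <= N)%N -> chebyshev_pair Delta a1 a2 n1 n2).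

Definition typeI_MOP {R : realType} (N : nat) (z : 'I_N -> R)
  (alpha1 alpha2 : 'I_N -> R) (n : nat) (A1 A2 : {poly R}) : Prop :=
  (size A1 <= sl1 n)%N /\ (size A2 <= sl2 n)%N /\
  (forall k : nat, (k < n)%N ->
     \sum_(i < N) (alpha1 i * A1.[z i] + alpha2 i * A2.[z i]) * z i ^+ k
       = (k == n.-1)%:R).

Definition typeII_MOP {R : realType} (N : nat) (z : 'I_N -> R)
  (alpha1 alpha2 : 'I_N -> R) (n : nat) (P : {poly R}) : Prop :=
  P \is monic /\ size P = n.+1 /\
  (forall k : nat, (k < sl1 n)%N -> \sum_(i < N) alpha1 i * P.[z i] * z i ^+ k = 0) /\
  (forall k : nat, (k < sl2 n)%N -> \sum_(i < N) alpha2 i * P.[z i] * z i ^+ k = 0).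

Definition prevP {R : realType} (P : nat -> {poly R}) (n k : nat) : {poly R} :=
  if (k <= n)%N then P (n - k)%N else 0.

(* Main.v *)
Require Import Defs.
From HB Require Import structures.
From mathcomp Require Import all_boot all_order all_algebra.
From mathcomp Require Import all_classical all_reals topology normedtype.
From mathcomp Require Import zify.
Import Order.TTheory GRing.Theory Num.Theory.
Local Open Scope ring_scope.

Lemma key_deg (R : realType) (p q s : {poly R}) (a e : R) :
  p != 0 -> (size q <= size p)%N -> (size s <= size p)%N ->
  'X * p = q + a *: p + e *: s -> False.
Proof.
move=> p0 hq hs E.
have : size ('X * p) = (size p).+1 by rewrite mulrC size_mulX.
rewrite E => H.
have : (size (q + a *: p + e *: s)%R <= size p)%N.
  apply: (leq_trans (size_polyD _ _)); rewrite geq_max; apply/andP; split.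
    apply: (leq_trans (size_polyD _ _)); rewrite geq_max hq /=.
    exact: size_scale_leq.
  exact: (leq_trans (size_scale_leq _ _) hs).
by rewrite H ltnn.
Qed.

Lemma sl_even k : sl1 k.*2 = k /\ sl2 k.*2 = k.
Proof. by rewrite /sl1 /sl2 uphalf_double half_double. Qed.

Lemma sl_odd k : sl1 k.*2.+1 = k.+1 /\ sl2 k.*2.+1 = k.
Proof. by rewrite /sl1 /sl2 /= uphalf_double half_double. Qed.

Theorem mainTheorem3 (R : realType) (N : nat) (z : 'I_N -> R)
  (alpha1 alpha2 : 'I_N -> R) (Delta : interval R)
  (A1 A2 P : nat -> {poly R}) (b c d : nat -> R) :
  injective z ->
  (forall i, 0 < alpha1 i) -> (forall i, 0 < alpha2 i) ->
  (forall i, z i \in Delta) ->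
  AT_system z alpha1 alpha2 Delta ->
  (* type I MOPs on the step-line, 1 <= n <= N, with exact degrees *)
  (forall n, (1 <= n <= N)%N -> typeI_MOP z alpha1 alpha2 n (A1 n) (A2 n)) ->
  (forall n, (1 <= n <= N)%N -> size (A1 n) = sl1 n /\ size (A2 n) = sl2 n) ->
  A1 0%N = 0 -> A2 0%N = 0 ->
  (* monic type II MOPs, 0 <= n <= N, and their recurrence coefficients *)
  (forall n, (n <= N)%N -> typeII_MOP z alpha1 alpha2 n (P n)) ->
  (forall n, (n < N)%N ->
     'X * P n = P n.+1 + b n *: P n + c n *: prevP P n 1 + d n *: prevP P n 2) ->
  (* the type I recurrence *)
  (forall n, (1 <= n)%N -> (n <= N - 2)%N ->
     'X * A1 n = A1 n.-1 + b n.-1 *: A1 n + c n *: A1 n.+1 + d n.+1 *: A1 n.+2 /\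
     'X * A2 n = A2 n.-1 + b n.-1 *: A2 n + c n *: A2 n.+1 + d n.+1 *: A2 n.+2) ->
  forall n, (1 <= n)%N -> (n <= N - 2)%N -> d n.+1 != 0.
Proof.
move=> _ _ _ _ _ _ Hsz H10 H20 _ _ Hrec n h1 h2; apply/eqP => hd.
have [E1 E2] := Hrec n h1 h2.
rewrite hd !scale0r !addr0 in E1 E2.
have [Sn1 Sn2] : size (A1 n) = sl1 n /\ size (A2 n) = sl2 n.
  by apply: Hsz; rewrite h1 /=; apply: leq_trans h2 (leq_subr _ _).
have [Sm1 Sm2] : size (A1 n.+1) = sl1 n.+1 /\ size (A2 n.+1) = sl2 n.+1.
  by apply: Hsz => /=; lia.
have [k [Hk|Hk]] : exists k, n = k.*2 \/ n = k.*2.+1.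
  exists n./2; have := odd_double_half n; case: (odd n) => /= E; [right|left]; by rewrite -{1}E ?add1n ?add0n.
- subst n; case: k hd h1 h2 E1 E2 Sn1 Sn2 Sm1 Sm2 => [//|k] hd h1 h2 E1 E2 Sn1 Sn2 Sm1 Sm2.
  rewrite doubleS in h1 h2 E1 E2 Sn1 Sn2 Sm1 Sm2 *.
  have [_ Q2] := sl_even k.+1; rewrite doubleS in Q2.
  have [_ Q2'] := sl_odd k.+1; rewrite doubleS in Q2'.
  have [Sp1 Sp2] : size (A1 k.*2.+1) = sl1 k.*2.+1 /\ size (A2 k.*2.+1) = sl2 k.*2.+1.
    by apply: Hsz => /=; lia.
  have [_ Q3] := sl_odd k.
  rewrite /= in E2; apply: (@key_deg _ _ _ _ _ _ _ _ _ E2).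
  + by rewrite -size_poly_eq0 Sn2 Q2.
  + by rewrite /= Sp2 Sn2 Q2 Q3.
  + by rewrite Sm2 Sn2 Q2 Q2'.
- subst n.
  have [Q1 _] := sl_odd k.
  have [Q1' _] := sl_even k.+1; rewrite doubleS in Q1'.
  have Sp1 : (size (A1 k.*2) <= k)%N.
    case: k {E1 E2 Sn1 Sn2 Sm1 Sm2 Q1 Q1'} hd h1 h2 => [|k] hd h1 h2; first by rewrite H10 size_poly0.
    have [S _] : size (A1 k.+1.*2) = sl1 k.+1.*2 /\ size (A2 k.+1.*2) = sl2 k.+1.*2.
      by apply: Hsz; move: h2; rewrite -!mul2n; lia.
    by rewrite S; have [-> _] := sl_even k.+1.
  apply: (@key_deg _ _ _ _ _ _ _ _ _ E1).
  + by rewrite -size_poly_eq0 Sn1 Q1.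
  + by rewrite /= Sn1 Q1; apply: (leq_trans Sp1).
  + by rewrite Sm1 Sn1 Q1 Q1'.
Qed.
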